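(* Let $n\ge2$, $m\in\mathbb{Z}_{>0}$, $q\in(-1,1)$. Let $\boldsymbol{\xi}\in\mathbb{R}^n$ with $\xi_j-\xi_k\notin2\pi\mathbb{Z}$ for $j\ne k$ satisfy \[ e^{im\xi_j}=(-1)^{n-1}\prod_{1\le k\le n,\,k\ne j}\frac{1-qe^{i(\xi_j-\xi_k)}}{e^{i(\xi_j-\xi_k)}-q}\qquad(j=1,\dots,n). \] Then for every $\mu$ in the $\mathbb{Z}$-span of $\omega_1,\dots,\omega_{n-1}$ with $\mu_1-\mu_n=m+1$, one has $P_{\texttt{a};\mu}(\boldsymbol{\xi};q)=q\,P_{\texttt{a};\mu-e_1+e_n}(\boldsymbol{\xi};q)$.
   Context: $e_1,\dots,e_n$ is the standard basis of $\mathbb{R}^n$, $\omega_j=e_1+\dots+e_j-\frac jn(e_1+\dots+e_n)$. $C_{\texttt{a}}(\boldsymbol{\xi};q)=\prod_{1\le j<k\le n}\frac{1-qe^{-i(\xi_j-\xi_k)}}{1-e^{-i(\xi_j-\xi_k)}}$ and $P_{\texttt{a};\mu}(\boldsymbol{\xi};q)=\sum_{\sigma\in S_n}C_{\texttt{a}}(\xi_{\sigma_1},\dots,\xi_{\sigma_n};q)\exp(i\xi_{\sigma_1}\mu_1+\dots+i\xi_{\sigma_n}\mu_n)$. *)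

(* Defs.v *)
From HB Require Import structures.
From mathcomp Require Import all_boot all_order all_algebra all_fingroup.
From mathcomp Require Import reals trigo.
From mathcomp Require Import complex.
Set Implicit Arguments. Unset Strict Implicit. Unset Printing Implicit Defensive.
Import Order.TTheory GRing.Theory Num.Theory.
Local Open Scope ring_scope.
Local Open Scope complex_scope.

Definition expi (R : realType) (t : R) : R[i] := cos t +i* sin t.

(* standard basis vector e_{i} of R^n (0-based index) *)
Definition evec (R : realType) (n : nat) (i : 'I_n) : 'I_n -> R :=
  fun k => (k == i)%:R.

(* omega_j = e_1 + ... + e_j - (j/n)(e_1 + ... + e_n); coordinate k (0-based) *)
Definition omega (R : realType) (n j : nat) : 'I_n -> R :=
  fun k => (k < j)%N%:R - j%:R / n%:R.

Definition in_weight_lattice (R : realType) (n : nat) (mu : 'I_n -> R) : Prop :=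
  exists c : nat -> int, forall k : 'I_n,
    mu k = \sum_(1 <= j < n) (c j)%:~R * @omega R n j k.

Definition Ca (R : realType) (n : nat) (xi : 'I_n -> R) (q : R) : R[i] :=
  \prod_(j : 'I_n) \prod_(k : 'I_n | (j < k)%N)
     ((1 - q%:C * expi (- (xi j - xi k))) / (1 - expi (- (xi j - xi k)))).

Definition Pa (R : realType) (n : nat) (mu xi : 'I_n -> R) (q : R) : R[i] :=
  \sum_(s : {perm 'I_n})
     Ca (fun j => xi (s j)) q * expi (\sum_(j : 'I_n) xi (s j) * mu j).

(* Main.v *)
Require Import Defs.
From HB Require Import structures.
From mathcomp Require Import all_boot all_order all_algebra all_fingroup.
From mathcomp Require Import reals trigo.
From mathcomp Require Import complex.
From mathcomp Require Import ring lra.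
Import Order.TTheory GRing.Theory Num.Theory.
Local Open Scope ring_scope.
Local Open Scope complex_scope.
Set Implicit Arguments. Unset Strict Implicit.

Section S1.
Variable R : realType.
Lemma expiD (a b : R) : expi (a + b) = expi a * expi b.
Proof. rewrite /expi cosD sinD. simpc. by congr (_ +i* _); rewrite addrC. Qed.
Lemma expi0 : expi (0:R) = 1.
Proof. by rewrite /expi cos0 sin0. Qed.
Lemma expiN (a : R) : expi (- a) = (expi a)^-1.
Proof.
have h : expi a * expi (-a) = 1 by rewrite -expiD subrr expi0.
have ha : expi a != 0 by apply/eqP=> e; move: h; rewrite e mul0r; apply/eqP; rewrite eq_sym oner_eq0.
by rewrite -[expi (-a)]mul1r -(mulVf ha) -mulrA h mulr1.
Qed.
Lemma expi_neq0 (a : R) : expi a != 0.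
Proof.
apply/eqP=> e; have := expiD a (-a); rewrite subrr expi0 e mul0r; apply/eqP; by rewrite oner_eq0.
Qed.
Lemma expi_sub_neq0 (q u v : R) : -1 < q < 1 -> expi u - q%:C * expi v != 0.
Proof.
move=> hq; rewrite subr_eq0 /expi; apply/negP; rewrite eq_complex /= => /andP[/eqP h1 /eqP h2].
have := cos2Dsin2 u; have := cos2Dsin2 v. rewrite h1 h2. move=> e1 e2. nra.
Qed.
End S1.
Section S.
Variable C : comRingType.
Variable n : nat.
Variables p r : 'I_n.
Hypothesis hp : nat_of_ord p = 0%N.
Hypothesis hr : nat_of_ord r = n.-1.
Hypothesis hpr : p != r.
Definition mid (k : 'I_n) := (k != p) && (k != r).

Lemma ltn_r (j : 'I_n) : j != r -> (j < r)%N.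
Proof.
rewrite -(inj_eq val_inj) /= hr => jr; have := ltn_ord j.
by case: n j jr => // n' j jr; rewrite /= ltnS leq_eqVlt (negbTE jr).
Qed.
Lemma gt_p (j : 'I_n) : j != p -> (p < j)%N.
Proof. by rewrite -(inj_eq val_inj) /= hp lt0n. Qed.

Lemma prod_pairs_split (F : 'I_n -> 'I_n -> C) :
  \prod_(j : 'I_n) \prod_(k : 'I_n | (j < k)%N) F j k =
  F p r * \prod_(k | mid k) (F p k * F k r) *
  \prod_(j | mid j) \prod_(k | mid k && (j < k)%N) F j k.
Proof.
rewrite (bigD1 p) //= [\prod_(i | i != p) _](bigD1 r) //=; last by rewrite eq_sym.
have -> : \prod_(k : 'I_n | (r < k)%N) F r k = 1.
  apply: big_pred0 => k; apply/negbTE; rewrite -leqNgt hr.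
  by have := ltn_ord k; case: n k => // n' k; rewrite ltnS.
have -> : \prod_(k : 'I_n | (p < k)%N) F p k = F p r * \prod_(k | mid k) F p k.
  rewrite (bigD1 r) /=; last by apply: gt_p; rewrite eq_sym.
  congr (_ * _); apply: eq_bigl => k; rewrite /mid; congr (_ && _).
  by rewrite -(inj_eq val_inj) /= hp lt0n.
have -> : \prod_(j | (j != p) && (j != r)) \prod_(k : 'I_n | (j < k)%N) F j k =
          \prod_(j | mid j) (F j r * \prod_(k | mid k && (j < k)%N) F j k).
  apply: eq_bigr => j /andP[jp jr]; rewrite (bigD1 r) /=; last exact: ltn_r.
  congr (_ * _); apply: eq_bigl => k; rewrite /mid.
  case: (boolP (j < k)%N) => jk; last by rewrite !andbF.
  rewrite !andbT andTb; suff -> : k != p by [].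
  by apply/eqP=> e; move: jk; rewrite e hp.
rewrite mul1r big_split /= big_split /=; by rewrite !mulrA (mulrAC _ (\prod_(i | mid i) F i r)).
Qed.

End S.
Section F.
Variable C : fieldType.
Variable qc : C.
Definition cc (u v : C) := (u - qc * v) / (u - v).
Definition bb (u v : C) := (v - qc * u) / (u - qc * v).
Lemma per_y (a b y : C) : a - qc * y != 0 -> b - qc * y != 0 ->
  cc a y * cc y b * bb a y = cc b y * cc y a * bb b y.
Proof.
move=> ha hb; rewrite /cc /bb.
have i1 : (a - y)^-1 = -(y - a)^-1 by rewrite -invrN opprB.
have i2 : (y - b)^-1 = -(b - y)^-1 by rewrite -invrN opprB.
rewrite i1 i2; move: (y - a)^-1 (b - y)^-1 => u v.
field; by rewrite ?ha ?hb.
Qed.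

Lemma head_id (a b : C) : a - qc * b != 0 -> b - qc * a != 0 ->
  cc a b * bb a b * (a - qc * b) = - (cc b a * bb b a * (b - qc * a)).
Proof.
move=> ha hb; rewrite /cc /bb.
have i1 : (a - b)^-1 = -(b - a)^-1 by rewrite -invrN opprB.
rewrite i1; move: (b - a)^-1 => u.
field; by rewrite ?ha ?hb.
Qed.

Definition CC n (y : 'I_n -> C) := \prod_(j : 'I_n) \prod_(k : 'I_n | (j < k)%N) cc (y j) (y k).

Lemma core n (p r : 'I_n) (y : 'I_n -> C) (m : nat) (sg : C) :
  nat_of_ord p = 0%N -> nat_of_ord r = n.-1 -> p != r ->
  (forall j k, y j - qc * y k != 0) ->
  y p ^+ m = sg * \prod_(k | k != p) bb (y p) (y k) ->
  y r ^+ m = sg * \prod_(k | k != r) bb (y r) (y k) ->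
  CC (fun j => y (tperm p r j)) * y r ^+ m * (y r - qc * y p) =
  - (CC y * y p ^+ m * (y p - qc * y r)).
Proof.
move=> hp hr hpr hq Bp Br.
rewrite /CC !(prod_pairs_split hp hr hpr) tpermL tpermR Bp Br.
rewrite [\prod_(k | k != r) _](bigD1 p) //=.
rewrite [\prod_(k | k != p) _](bigD1 r) //=; last by rewrite eq_sym.
have Em : forall k, mid p r k -> tperm p r k = k.
  by move=> k /andP[kp kr]; rewrite tpermD // eq_sym.
have e1 : \prod_(k | mid p r k) (cc (y r) (y (tperm p r k)) * cc (y (tperm p r k)) (y p)) =
  \prod_(k | mid p r k) (cc (y r) (y k) * cc (y k) (y p)) by apply: eq_bigr => k /Em ->.
have e2 : \prod_(j | mid p r j) \prod_(k | mid p r k && (j < k)%N) cc (y (tperm p r j)) (y (tperm p r k)) =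
  \prod_(j | mid p r j) \prod_(k | mid p r k && (j < k)%N) cc (y j) (y k).
  by apply: eq_bigr => j /Em ->; apply: eq_bigr => k /andP[/Em -> _].
rewrite e1 e2.
set Q := \prod_(j | mid p r j) \prod_(k | mid p r k && (j < k)%N) cc (y j) (y k).
rewrite -/(mid p r) (eq_bigl (mid p r)); last by move=> k; rewrite /mid andbC.
set P1 := \prod_(k | mid p r k) (cc (y r) (y k) * cc (y k) (y p)).
set P2 := \prod_(k | mid p r k) bb (y r) (y k).
set P3 := \prod_(k | mid p r k) (cc (y p) (y k) * cc (y k) (y r)).
set P4 := \prod_(k | mid p r k) bb (y p) (y k).
have E : P1 * P2 = P3 * P4.
  rewrite /P1 /P2 /P3 /P4 -!big_split /=; apply: eq_bigr => k _.
  by apply: per_y.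
have H := head_id (hq r p) (hq p r).
transitivity ((cc (y r) (y p) * bb (y r) (y p) * (y r - qc * y p)) * (P1 * P2) * Q * sg); first by ring.
rewrite H E; ring.
Qed.
End F.

Section Main.
Variable R : realType.
Local Notation C := R[i].

Lemma expi_natmul (m : nat) (u : R) : expi (m%:R * u) = expi u ^+ m.
Proof.
rewrite mulr_natl; elim: m => [|m IH]; first by rewrite mulr0n expi0 expr0.
by rewrite mulrS expiD IH exprS.
Qed.

Lemma expiB (u v : R) : expi (u - v) = expi u * (expi v)^-1.
Proof. by rewrite expiD expiN. Qed.

Lemma expi_sum (I : finType) (P : pred I) (f : I -> R) :
  expi (\sum_(i | P i) f i) = \prod_(i | P i) expi (f i).
Proof. by apply: (big_morph _ (@expiD R) (@expi0 R)). Qed.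

Lemma gE (q u v : R) :
  (1 - q%:C * expi (- (u - v))) / (1 - expi (- (u - v))) = cc q%:C (expi u) (expi v).
Proof.
rewrite opprB expiB /cc; have hu := expi_neq0 u.
move: (expi u) (expi v) hu => U V hU.
have e1 : U - q%:C * V = U * (1 - q%:C * (V * U^-1)) by field.
have e2 : U - V = U * (1 - V * U^-1) by field.
by rewrite e1 e2 invfM mulrACA divff // mul1r.
Qed.

Lemma CaE n (x : 'I_n -> R) (q : R) :
  Ca x q = CC q%:C (fun j => expi (x j)).
Proof.
rewrite /Ca /CC; apply: eq_bigr => j _; apply: eq_bigr => k _; exact: gE.
Qed.

Lemma factorE (q u v : R) : -1 < q < 1 ->
  (1 - q%:C * expi (u - v)) / (expi (u - v) - q%:C) = bb q%:C (expi u) (expi v).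
Proof.
move=> hq; rewrite expiB /bb; have hv := expi_neq0 v; have huv := expi_sub_neq0 u v hq.
move: (expi u) (expi v) hv huv => U V hV hUV.
have e1 : 1 - q%:C * (U * V^-1) = (V - q%:C * U) * V^-1 by field.
have e2 : U * V^-1 - q%:C = (U - q%:C * V) * V^-1 by field.
rewrite e1 e2 invfM invrK mulrACA.
by rewrite [V^-1 * V]mulrC divff // mulr1.
Qed.

Lemma sum_evec n (a : 'I_n -> R) (p : 'I_n) : \sum_j a j * @evec R n p j = a p.
Proof.
rewrite (bigD1 p) //= /evec eqxx mulr1 big1 ?addr0 // => j /negbTE ->; by rewrite mulr0.
Qed.

Lemma sum_split n (p r : 'I_n) (g : 'I_n -> R) : p != r ->
  \sum_j g j = g p + g r + \sum_(j | mid p r j) g j.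
Proof.
move=> hpr; rewrite (bigD1 p) //= (bigD1 r) /=; last by rewrite eq_sym.
by rewrite addrA.
Qed.

Lemma final_alg (qc K0 K1 E a b A B : C) : a != 0 -> b != 0 -> A != 0 ->
  K1 * B * (b - qc * a) = - (K0 * A * (a - qc * b)) ->
  K1 * E * ((B * b) / (A * a)) - qc * (K1 * E * ((B * b) / (A * a)) * b^-1 * a) =
  - (K0 * E - qc * (K0 * E * a^-1 * b)).
Proof.
move=> ha hb hA core.
have key : K1 * E * ((B * b) / (A * a)) - qc * (K1 * E * ((B * b) / (A * a)) * b^-1 * a)
  = (K1 * B * (b - qc * a)) * E / (A * a) by field; rewrite ?ha ?hb ?hA.
rewrite key core; field; by rewrite ?ha ?hb ?hA.
Qed.

End Main.

Lemma CC_ext (C : fieldType) (qc : C) n (y y' : 'I_n -> C) :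
  (forall j, y j = y' j) -> CC qc y = CC qc y'.
Proof. by move=> e; rewrite /CC; apply: eq_bigr => j _; apply: eq_bigr => k _; rewrite !e. Qed.

Unset Implicit Arguments.
Theorem mainTheorem8 (R : realType) (n m : nat) (q : R) (xi : 'I_n -> R)
  (i1 iN : 'I_n) :
  (2 <= n)%N -> (0 < m)%N -> -1 < q < 1 ->
  nat_of_ord i1 = 0%N -> nat_of_ord iN = n.-1 ->
  (forall j k : 'I_n, j != k -> forall z : int, xi j - xi k != z%:~R * (2 * pi)) ->
  (forall j : 'I_n,
     expi (m%:R * xi j) =
     (-1) ^+ n.-1 * \prod_(k : 'I_n | k != j)
        ((1 - q%:C * expi (xi j - xi k)) / (expi (xi j - xi k) - q%:C))) ->
  forall mu : 'I_n -> R,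
    in_weight_lattice mu -> mu i1 - mu iN = (m.+1)%:R ->
    Pa mu xi q = q%:C * Pa (fun k => mu k - @evec R n i1 k + @evec R n iN k) xi q.
Proof.
move=> hn hm hq h1 hN _ Hb mu _ hmu.
have hpr : i1 != iN.
  apply/eqP => e; have := congr1 val e; rewrite /= h1 hN; by case: n hn {xi i1 iN Hb mu hmu h1 hN e} => [|[|n']].
set qc := q%:C.
pose x := fun j => expi (xi j).
have Bx : forall j, x j ^+ m = (-1)^+n.-1 * \prod_(k | k != j) bb qc (x j) (x k).
  move=> j; rewrite /x -expi_natmul Hb; congr (_ * _); apply: eq_bigr => k _; exact: factorE.
have Bpos : forall (s : {perm 'I_n}) p, x (s p) ^+ m =
    (-1)^+n.-1 * \prod_(k | k != p) bb qc (x (s p)) (x (s k)).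
  move=> s p; rewrite Bx (reindex_inj (@perm_inj _ s)) /=; congr (_ * _).
  by apply: eq_bigl => k; rewrite (inj_eq (@perm_inj _ s)).
pose mu' := (fun k => mu k - @evec R n i1 k + @evec R n iN k).
pose T := fun s : {perm 'I_n} =>
  Ca (fun j => xi (s j)) q * expi (\sum_j xi (s j) * mu j) -
  qc * (Ca (fun j => xi (s j)) q * expi (\sum_j xi (s j) * mu' j)).
have X1 : forall s' : {perm 'I_n}, \sum_j xi (s' j) * mu' j =
    \sum_j xi (s' j) * mu j - xi (s' i1) + xi (s' iN).
  move=> s'; rewrite /mu'.
  under eq_bigr => j _ do rewrite mulrDr mulrBr.
  by rewrite big_split sumrB /= !sum_evec.
have HT : forall s, T (tperm i1 iN * s)%g = - T s.
  move=> s; rewrite /T !X1 !permM tpermL tpermR.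
  have X2 : \sum_j xi ((tperm i1 iN * s)%g j) * mu j =
      \sum_j xi (s j) * mu j + (xi (s iN) - xi (s i1)) * (m.+1)%:R.
    rewrite (sum_split _ hpr) [in RHS](sum_split _ hpr) !permM tpermL tpermR -hmu.
    have -> : \sum_(j | mid i1 iN j) xi ((tperm i1 iN * s)%g j) * mu j =
              \sum_(j | mid i1 iN j) xi (s j) * mu j.
      by apply: eq_bigr => j /andP[j1 jN]; rewrite permM tpermD // eq_sym.
    ring.
  rewrite X2 !CaE.
  rewrite (@CC_ext _ _ _ _ (fun j => x (s (tperm i1 iN j)))); last by move=> j; rewrite permM.
  rewrite [_ * m.+1%:R]mulrC !expiD !expiN expi_natmul expiD expiN exprMn exprVn !exprSr.
  have hqq : forall j k, x (s j) - qc * x (s k) != 0 by move=> j k; apply: expi_sub_neq0.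
  have co := core h1 hN hpr hqq (Bpos s i1) (Bpos s iN).
  have F := final_alg (K0 := CC qc (fun j => x (s j))) (expi (\sum_j xi (s j) * mu j))
    (expi_neq0 (xi (s i1))) (expi_neq0 (xi (s iN))) (expf_neq0 m (expi_neq0 (xi (s i1)))) co.
  rewrite /x /= in F; rewrite /x /=.
  by apply: (etrans _ (etrans F _)); ring.
have e : \sum_s T s = - \sum_s T s.
  rewrite {1}(reindex_inj (mulgI (tperm i1 iN))) /=.
  by rewrite (eq_bigr (fun s => - T s)) ?sumrN // => s _; rewrite HT.
have HS : \sum_s T s = 0.
  move/eqP: e; rewrite -subr_eq0 opprK -mulr2n -mulr_natr mulf_eq0 pnatr_eq0 orbF.
  by move/eqP.
apply/eqP; rewrite -subr_eq0 /Pa mulr_sumr -sumrB; apply/eqP; exact: HS.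
Qed.
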